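(* Let $n\ge 2$ be odd, $\pi=A_1\cdots A_n\in\mathbb{S}_{2n}$ with $A_i=(2i-1\ \ 2i)$, and $\mathcal{O}_\pi$ its conjugacy class. If $\rho=\chi_{(n)}\otimes\epsilon$ or $\rho=\chi_{(n)}\otimes\mathrm{sgn}$, then the braiding of $M(\mathcal{O}_\pi,\rho)$ is negative.
   Context: Permutations are composed right to left. For a finite group $G$, a conjugacy class $\mathcal{C}$, a fixed $s\in\mathcal{C}$ with centralizer $G^s$ and an irreducible representation $(\rho,V)$ of $G^s$, $M(\mathcal{C},\rho)$ is the irreducible Yetter–Drinfeld module over $\mathbb{C}G$: enumerate $\mathcal{C}=\{t_1=s,\dots,t_M\}$, choose $g_i\in G$ with $g_isg_i^{-1}=t_i$; $M(\mathcal{C},\rho)=\bigoplus_i g_i\otimes V$ with grading $\deg(g_i\otimes v)=t_i$, action $g\cdot(g_i\otimes v)=g_j\otimes\rho(\gamma)v$ where $gg_i=g_j\gamma$, $\gamma\in G^s$, and braiding $c((g_i\otimes v)\otimes(g_j\otimes w))=(g_h\otimes\rho(\gamma)w)\otimes(g_i\otimes v)$ where $t_ig_j=g_h\gamma$, $\gamma\in G^s$. When $\rho$ is one-dimensional, the braiding is called negative if for all $i,j$ with $t_it_j=t_jt_i$, setting $q_{ij}:=\rho(g_j^{-1}t_ig_j)$, one has $q_{ii}=-1$ and $q_{ij}q_{ji}=1$. The centralizer is $\mathbb{S}_{2n}^\pi=\langle A_1,\dots,A_n\rangle\rtimes\langle B_1,\dots,B_{n-1}\rangle\cong\mathbb{Z}_2^n\rtimes\mathbb{S}_n$,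 where $B_j=(2j-1\ \ 2j+1)(2j\ \ 2j+2)$ corresponds to $(j\ j+1)\in\mathbb{S}_n$. $\chi_{(n)}\otimes\epsilon$ (resp. $\chi_{(n)}\otimes\mathrm{sgn}$) is the one-dimensional representation with $A_i\mapsto-1$ for all $i$ and $B_j\mapsto1$ (resp. $B_j\mapsto-1$) for all $j$. *)

(* Defs.v *)
From HB Require Import structures.
From mathcomp Require Import all_boot all_order all_algebra all_fingroup all_field.
From mathcomp Require Import zify.
Set Implicit Arguments. Unset Strict Implicit. Unset Printing Implicit Defensive.
Import GRing.Theory Num.Theory.
Local Open Scope group_scope.

(* Points 1..2n of the paper are the ordinals 0..2n-1 of 'I_(2*n):
   paper point p  <->  ordinal p-1. *)

Lemma ordA0_lt n (k : 'I_n) : 2 * k < 2 * n. Proof. have := ltn_ord k; lia. Qed.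
Lemma ordA1_lt n (k : 'I_n) : 2 * k + 1 < 2 * n. Proof. have := ltn_ord k; lia. Qed.

(* A_(k+1) = (2k+1  2k+2) in paper numbering, for k < n *)
Definition Aperm n (k : 'I_n) : 'S_(2 * n) :=
  tperm (Ordinal (ordA0_lt k)) (Ordinal (ordA1_lt k)).

Definition piperm n : 'S_(2 * n) := \prod_(k < n) Aperm k.

Lemma ordB0_lt n (k : 'I_n.-1) : 2 * k < 2 * n. Proof. have := ltn_ord k; lia. Qed.
Lemma ordB1_lt n (k : 'I_n.-1) : 2 * k + 1 < 2 * n. Proof. have := ltn_ord k; lia. Qed.
Lemma ordB2_lt n (k : 'I_n.-1) : 2 * k + 2 < 2 * n. Proof. have := ltn_ord k; lia. Qed.
Lemma ordB3_lt n (k : 'I_n.-1) : 2 * k + 3 < 2 * n. Proof. have := ltn_ord k; lia. Qed.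

(* B_(k+1) = (2k+1  2k+3)(2k+2  2k+4) in paper numbering, for k < n-1 *)
Definition Bperm n (k : 'I_n.-1) : 'S_(2 * n) :=
  tperm (Ordinal (ordB0_lt k)) (Ordinal (ordB2_lt k)) *
  tperm (Ordinal (ordB1_lt k)) (Ordinal (ordB3_lt k)).

(* One-dimensional representation of the subgroup H, as a function on gT
   (values outside H are irrelevant). *)
Definition one_dim_rep (gT : finGroupType) (H : {set gT}) (rho : gT -> algC) :=
  rho 1%g = 1%R /\ {in H &, forall x y, rho (x * y) = (rho x * rho y)%R}.

(* g is a choice of conjugating elements: for each t in the class of s,
   g t s (g t)^-1%g = t (paper's convention, i.e. mathcomp's s ^ g t = t,
   since mathcomp composes permutations left to right). *)
Definition conj_choice (gT : finGroupType) (s : gT) (g : gT -> gT) :=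
  forall t, t \in s ^: [set: gT] -> s ^ g t = t.

(* Negative braiding: q_{t u} := rho(g_u^{-1} t g_u) (paper product),
   which in mathcomp's left-to-right product is t ^ (g u)^-1%g. *)
Definition qcoef (gT : finGroupType) (rho : gT -> algC) (g : gT -> gT)
    (t u : gT) : algC := rho ((t ^ (g u)^-1)%g).

Definition negative_braiding (gT : finGroupType) (s : gT) (rho : gT -> algC)
    (g : gT -> gT) :=
  forall t u, t \in s ^: [set: gT] -> u \in s ^: [set: gT] -> commute t u ->
    qcoef rho g t t = (-1)%R /\
    (qcoef rho g t u * qcoef rho g u t)%R = 1%R.

(* Main.v *)
Require Import Defs.
From HB Require Import structures.
From mathcomp Require Import all_boot all_order all_algebra all_fingroup all_field.
From mathcomp Require Import zify.
Import GRing.Theory Num.Theory.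
Local Open Scope group_scope.

Section Swap.
Variable N : nat.
Variables P X : 'S_N.
Hypothesis PP : forall a, P (P a) = a.
Hypothesis XX : forall a, X (X a) = a.
Hypothesis Pfp : forall a, P a != a.
Hypothesis Xfp : forall a, X a != a.
Hypothesis PX : forall a, P (X a) = X (P a).

Let Z a := P (X a).
Let F (a : 'I_N) : bool := minn (val a) (val (Z a)) < minn (val (P a)) (val (X a)).
Let dfun a := if (Z a == a) || F a then a else Z a.

Lemma ZZ a : Z (Z a) = a.
Proof. by rewrite /Z [P (X a)]PX XX PP. Qed.

Lemma FZ a : F (Z a) = F a.
Proof.
rewrite /F ZZ /Z PP PX XX minnC; congr (_ < _); by rewrite minnC.
Qed.

Lemma distinct4 a : Z a != a ->
  [/\ a != P a, a != X a, P a != X a, Z a != P a & Z a != X a].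
Proof.
move=> Za.
have h1 : a != P a by rewrite eq_sym Pfp.
have h2 : a != X a by rewrite eq_sym Xfp.
split=> //.
- apply/eqP=> e; move/eqP: Za; apply; by rewrite /Z -e PP.
- by rewrite /Z (inj_eq perm_inj).
- exact: Pfp.
Qed.

Lemma FX a : Z a != a -> F (X a) = ~~ F a.
Proof.
move=> Za; have [h1 h2 h3 h4 h5] := distinct4 a Za.
rewrite /F /Z XX PX.
move: Za h1 h2 h3 h4 h5; rewrite /Z PX.
move: (X (P a)) (P a) (X a) => za pa xa.
rewrite -!(inj_eq val_inj) => /eqP h0 /eqP h1 /eqP h2 /eqP h3 /eqP h4 /eqP h5.
rewrite -leqNgt. move: h0 h1 h2 h3 h4 h5; move: (val (X pa)) (val pa) (val xa) (val a) => z p x y *. apply/idP/idP; lia.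
Qed.

Lemma dK : cancel dfun dfun.
Proof.
move=> a; rewrite /dfun.
have [Za|Za] := eqVneq (Z a) a; first by rewrite /= Za eqxx.
have [Fa|Fa] := boolP (F a); first by rewrite /= (negbTE Za) Fa.
rewrite /= ZZ FZ (negbTE Fa) orbF.
by rewrite eq_sym (negbTE Za).
Qed.

Definition dperm : 'S_N := perm (can_inj dK).

Lemma dX a : dperm (X a) = P (dperm a).
Proof.
rewrite !permE /dfun.
have [Za|Za] := eqVneq (Z a) a.
  have ZXa : Z (X a) = X a.
    by rewrite /Z XX -{1}Za PP.
  rewrite ZXa eqxx /=.
  by rewrite -{1}Za /Z PX XX.
have [_ _ h3 _ _] := distinct4 a Za.
have ZXa : Z (X a) = P a by rewrite /Z XX.
rewrite ZXa (negbTE h3) FX //=.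
case: (F a) => /=.
  by [].
by rewrite /Z PP.
Qed.
End Swap.

Lemma swap_exists N (P X : 'S_N) :
  (forall a, P (P a) = a) -> (forall a, X (X a) = a) ->
  (forall a, P a != a) -> (forall a, X a != a) ->
  (forall a, P (X a) = X (P a)) ->
  exists d : 'S_N, X ^ d = P /\ P ^ d = X.
Proof.
move=> PP XX Pfp Xfp PX.
set d := @dperm N P X PP XX PX.
have dd : d * d = 1.
  apply/permP => a; rewrite permM perm1 /d !permE.
  exact: (@dK N P X PP XX PX).
have dV : d^-1 = d by apply/eqP; rewrite eq_invg_mul dd.
have XdP : X ^ d = P.
  apply/permP => a; rewrite conjgE dV !permM.
  rewrite (@dX N P X PP XX Pfp Xfp PX).
  have := dd; move/permP/(_ a); rewrite permM perm1 => ->.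
  by [].
exists d; split=> //.
by rewrite -XdP -conjgM dd conjg1.
Qed.
Definition partner (a : nat) : nat := if odd a then a.-1 else a.+1.

Lemma partner_spec (a : nat) : (partner a = if a %% 2 == 1 then a - 1 else a + 1)%N.
Proof. rewrite /partner; have := modn2 a; case: (odd a) => /= h; case: ifP; lia. Qed.

Lemma Aperm_val n (k : 'I_n) (a : 'I_(2*n)) :
  val (Aperm k a) = if a./2 == k then partner a else a.
Proof.
rewrite /Aperm permE /= partner_spec -!val_eqE /=.
have := ltn_ord a; have := ltn_ord k.

repeat (case: ifP => /= ?); lia.
Qed.

Lemma half_partner a : (partner a)./2 = a./2.
Proof. rewrite partner_spec; case: ifP; lia. Qed.

Lemma partnerK a : partner (partner a) = a.
Proof. rewrite !partner_spec; repeat case: ifP; lia. Qed.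

Lemma prod_val n (s : seq 'I_n) (a : 'I_(2*n)) : uniq s ->
  val ((\prod_(k <- s) Aperm k) a) =
  if a./2 \in [seq val k | k <- s] then partner a else a.
Proof.
elim: s a => [|k s IH] a /=; first by rewrite big_nil perm1.
move=> /andP [ks us].
rewrite big_cons permM inE.
have [e|ne] := eqVneq (a./2) (val k).
  have ha : val (Aperm k a) = partner a by rewrite Aperm_val e eqxx.
  rewrite IH // ha half_partner e.
  have -> : (val k \in [seq val k0 | k0 <- s]) = false.
    by apply/negbTE; rewrite mem_map //; exact: val_inj.
  by [].
have ha : Aperm k a = a by apply: val_inj; rewrite Aperm_val (negbTE ne).
by rewrite ha IH.
Qed.

Lemma pi_val n (a : 'I_(2*n)) : val (piperm n a) = partner a.
Proof.
rewrite /piperm prod_val ?index_enum_uniq //.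
have -> : (a./2 \in [seq val k | k <- index_enum 'I_n]) = true.
  have h : a./2 < n by have := ltn_ord a; lia.
  apply/mapP; exists (Ordinal h) => //; exact: mem_index_enum.
by [].
Qed.

Lemma piK n (a : 'I_(2*n)) : piperm n (piperm n a) = a.
Proof. by apply: val_inj; rewrite !pi_val partnerK. Qed.
Lemma partner_neq x : partner x != x.
Proof. rewrite partner_spec; case: ifP => /eqP h; apply/eqP; lia. Qed.


Lemma pi_fp n (a : 'I_(2*n)) : piperm n a != a.
Proof. rewrite -val_eqE pi_val; exact: partner_neq. Qed.

Lemma A_cent n (k : 'I_n) : Aperm k \in 'C[piperm n].
Proof.
apply/cent1P; apply/permP => a; rewrite !permM.
apply: val_inj; rewrite pi_val !Aperm_val pi_val half_partner.
by case: ifP.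
Qed.

Lemma commuteJ (gT : finGroupType) (a b h : gT) : commute a b -> commute (a ^ h) (b ^ h).
Proof. by move=> e; rewrite /commute -!conjMg e. Qed.

Lemma rho_pi n (n_odd : odd n) (rho : 'S_(2 * n) -> algC)
    (rho_rep : one_dim_rep 'C[piperm n] rho)
    (rhoA : forall k : 'I_n, rho (Aperm k) = (-1)%R) : rho (piperm n) = (-1)%R.
Proof.
case: rho_rep => r1 rM.
have gen : forall s : seq 'I_n, rho (\prod_(k <- s) Aperm k) = ((-1) ^+ size s)%R.
  elim=> [|k s IH]; first by rewrite big_nil r1 expr0.
  rewrite big_cons rM ?A_cent ?group_prod // => [|i _]; last exact: A_cent.
  by rewrite IH rhoA exprS.
rewrite /piperm gen -signr_odd.
have -> : size (index_enum 'I_n) = n.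
  by rewrite -[RHS]card_ord cardT enumT /index_enum; rewrite unlock.
by rewrite n_odd expr1.
Qed.

Theorem proposition2p4 (n : nat) (n_ge2 : 2 <= n) (n_odd : odd n)
    (eps : algC) (eps_val : eps = 1%R \/ eps = (-1)%R)
    (rho : 'S_(2 * n) -> algC)
    (rho_rep : one_dim_rep 'C[piperm n] rho)
    (rhoA : forall k : 'I_n, rho (Aperm k) = (-1)%R)
    (rhoB : forall k : 'I_n.-1, rho (Bperm k) = eps)
    (g : 'S_(2 * n) -> 'S_(2 * n))
    (g_ok : conj_choice (piperm n) g) :
  negative_braiding (piperm n) rho g.
Proof.
have rhoP := @rho_pi n n_odd rho rho_rep rhoA.
case: rho_rep => r1 rM.
move=> t u ht hu ctu.
set P := piperm n in rhoP ht hu g_ok *.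
have hcl v : v \in P ^: [set: 'S_(2 * n)] -> v ^ (g v)^-1 = P.
  by move=> hv; rewrite -{1}(g_ok v hv) conjgK.
rewrite /qcoef (hcl t ht); split=> //.
set x := t ^ (g u)^-1; set y := u ^ (g t)^-1.
have Pu := hcl u hu; have Pt := hcl t ht.
have xC : x \in 'C[P].
  by apply/cent1P; rewrite -Pu; exact: commuteJ.
have yC : y \in 'C[P].
  apply/cent1P; rewrite -Pt /y; apply: commute_sym; exact: commuteJ.
have PP a : P (P a) = a by exact: piK.
have PPg : P * P = 1 by apply/permP => a; rewrite permM perm1.
have conjP s a : (P ^ s) a != a.
  rewrite conjgE !permM; apply/eqP => e.
  have := pi_fp n (s^-1 a); rewrite -/P -{2}e permK eqxx //.
have conjPP s : (P ^ s) * (P ^ s) = 1 by rewrite -conjMg PPg conj1g.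
have xe : x = P ^ (g t * (g u)^-1) by rewrite conjgM (g_ok t ht).
have XX a : x (x a) = a.
  by have := conjPP (g t * (g u)^-1); rewrite -xe => /permP/(_ a); rewrite permM perm1.
have Xfp a : x a != a by rewrite xe; exact: conjP.
have PX a : P (x a) = x (P a).
  by move/cent1P: xC => /permP/(_ a); rewrite !permM.
have [d [XdP PdX]] := @swap_exists (2 * n) P x PP XX (@pi_fp n) Xfp PX.
set c := g u * (g t)^-1.
have xcP : x ^ c = P by rewrite conjgM /x conjgKV Pt.
have Pcy : P ^ c = y by rewrite conjgM (g_ok u hu).
set w := d * c.
have PwP : P ^ w = P by rewrite conjgM PdX xcP.
have xwy : x ^ w = y by rewrite conjgM XdP Pcy.
have wC : w \in 'C[P].
  apply/cent1P; rewrite /commute -{1}PwP conjgE mulgA mulgV mul1g //.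
have rV : (rho (w^-1)%g * rho w = 1)%R by rewrite -rM ?groupV // mulVg r1.
have rx : (rho x * rho x = 1)%R.
  rewrite -rM // -r1; congr rho; apply/permP => a; by rewrite permM XX perm1.
rewrite -/x -/y -xwy conjgE.
have wVC : (w^-1)%g \in 'C[P] by rewrite groupV.
have xwC : (x * w)%g \in 'C[P] by rewrite groupM.
rewrite (rM _ _ wVC xwC).
have -> : rho (x * w)%g = (rho x * rho w)%R by exact: rM.
by rewrite mulrCA (mulrA (rho x)) rx mul1r rV.
Qed.
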